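(* Let $n,k$ be integers with $2\le k\le n/2$. For every Gutkin $(n,k)$-gon, the contact angle equals $\pi(k-1)/n$.
   Context: Let $P$ be a convex $n$-gon in the Euclidean plane with vertices $v_0,\dots,v_{n-1}$ in their cyclic (counterclockwise) order, indices taken modulo $n$. $P$ is a Gutkin $(n,k)$-gon if there exists an angle $\alpha$ (the contact angle) such that for every $i$, $\angle v_{i+1}v_iv_{i+k}=\angle v_{i+k-1}v_{i+k}v_i=\alpha$, where $\angle abc$ denotes the angle at $b$ between the segments $ba$ and $bc$. *)

(* Defs.v *)
From Stdlib Require Import Reals Lra Lia.
Open Scope R_scope.

Definition pt := (R * R)%type.

Definition vsub (a b : pt) : pt := (fst a - fst b, snd a - snd b).
Definition dot (u w : pt) : R := fst u * fst w + snd u * snd w.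
Definition cross (u w : pt) : R := fst u * snd w - snd u * fst w.
Definition vnorm (u : pt) : R := sqrt (dot u u).

Definition angle (a b c : pt) : R :=
  acos (dot (vsub a b) (vsub c b) / (vnorm (vsub a b) * vnorm (vsub c b))).

Definition vert (n : nat) (v : nat -> pt) (i : nat) : pt := v (i mod n)%nat.

(* P = (v_0, ..., v_{n-1}) is a convex n-gon with vertices listed in
   counterclockwise order: n >= 3 and, for every directed edge v_i v_{i+1},
   every other vertex lies strictly to its left. *)
Definition convex_ccw_polygon (n : nat) (v : nat -> pt) : Prop :=
  (3 <= n)%nat /\
  forall i j : nat, (i < n)%nat -> (j < n)%nat -> j <> i -> j <> ((i + 1) mod n)%nat ->
    0 < cross (vsub (vert n v (i + 1)) (vert n v i)) (vsub (vert n v j) (vert n v i)).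

Definition gutkin_contact (n k : nat) (v : nat -> pt) (alpha : R) : Prop :=
  forall i : nat,
    angle (vert n v (i + 1)) (vert n v i) (vert n v (i + k)) = alpha /\
    angle (vert n v (i + k - 1)) (vert n v (i + k)) (vert n v i) = alpha.

(* Main.v *)
Require Import Defs.
From Stdlib Require Import Reals Lra Lia Psatz.
Open Scope R_scope.

Definition A (u w : pt) : R := acos (dot u w / (vnorm u * vnorm w)).

Lemma dot_pos (u w : pt) : cross u w <> 0 -> 0 < dot u u.
Proof.
  destruct u as [a b], w as [c d]; unfold cross, dot; simpl; intros H.
  destruct (Req_dec a 0); destruct (Req_dec b 0); subst; try nra.
Qed.

Lemma vnorm_pos u w : cross u w <> 0 -> 0 < vnorm u.
Proof. intros H; apply sqrt_lt_R0; eapply dot_pos; eauto. Qed.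

Lemma vnorm_sq u : vnorm u * vnorm u = dot u u.
Proof. apply sqrt_sqrt. destruct u; unfold dot; simpl; nra. Qed.

Lemma cross_anti u w : cross w u = - cross u w.
Proof. destruct u, w; unfold cross; simpl; ring. Qed.

Lemma lagrange u w : dot u u * dot w w = dot u w ^ 2 + cross u w ^ 2.
Proof. destruct u, w; unfold cross, dot; simpl; ring. Qed.

Lemma cs_A u w : 0 < cross u w ->
  cos (A u w) = dot u w / (vnorm u * vnorm w) /\
  sin (A u w) = cross u w / (vnorm u * vnorm w).
Proof.
  intros H.
  assert (Hu : 0 < vnorm u) by (apply (vnorm_pos u w); lra).
  assert (Hw : 0 < vnorm w) by (apply (vnorm_pos w u); rewrite cross_anti; lra).
  pose proof (vnorm_sq u) as Su; pose proof (vnorm_sq w) as Sw.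
  pose proof (lagrange u w) as L.
  set (x := dot u w / (vnorm u * vnorm w)).
  set (c := cross u w / (vnorm u * vnorm w)).
  assert (E : 1 - x² = c * c).
  { unfold x, c, Rsqr. field_simplify_eq; [| lra].
    replace (vnorm u ^ 2 * vnorm w ^ 2) with (dot u u * dot w w) by (rewrite <- Su, <- Sw; ring).
    rewrite L; ring. }
  assert (Hc : 0 < c) by (unfold c; apply Rdiv_lt_0_compat; nra).
  assert (Hx : -1 <= x <= 1).
  { assert (x² <= 1) by nra. unfold Rsqr in *. split; nra. }
  unfold A; fold x; split.
  - apply cos_acos; auto.
  - rewrite sin_acos; auto. rewrite E. apply sqrt_square. lra.
Qed.

Lemma A_add u w z : 0 < cross u w -> 0 < cross w z -> 0 < cross u z ->
  A u w + A w z = A u z.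
Proof.
  intros H1 H2 H3.
  destruct (cs_A u w H1) as [c1 s1]; destruct (cs_A w z H2) as [c2 s2].
  assert (Hu : 0 < vnorm u) by (apply (vnorm_pos u w); lra).
  assert (Hw : 0 < vnorm w) by (apply (vnorm_pos w z); lra).
  assert (Hz : 0 < vnorm z) by (apply (vnorm_pos z u); rewrite cross_anti; lra).
  pose proof (vnorm_sq w) as Sw.
  assert (I1 : dot u w * dot w z - cross u w * cross w z = dot w w * dot u z)
    by (destruct u, w, z; unfold dot, cross; simpl; ring).
  assert (I2 : cross u w * dot w z + dot u w * cross w z = dot w w * cross u z)
    by (destruct u, w, z; unfold dot, cross; simpl; ring).
  assert (C : cos (A u w + A w z) = dot u z / (vnorm u * vnorm z)).
  { rewrite cos_plus, c1, c2, s1, s2. field_simplify_eq; [|lra].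
    rewrite <- Sw in I1. nra. }
  assert (S : 0 < sin (A u w + A w z)).
  { rewrite sin_plus, c1, c2, s1, s2.
    replace (cross u w / (vnorm u * vnorm w) * (dot w z / (vnorm w * vnorm z)) +
             dot u w / (vnorm u * vnorm w) * (cross w z / (vnorm w * vnorm z)))
      with (cross u z / (vnorm u * vnorm z)).
    - apply Rdiv_lt_0_compat; nra.
    - field_simplify_eq; [|lra]. rewrite <- Sw in I2. nra. }
  pose proof (acos_bound (dot u w / (vnorm u * vnorm w))).
  pose proof (acos_bound (dot w z / (vnorm w * vnorm z))).
  fold (A u w) in *. fold (A w z) in *.
  assert (A u w + A w z < PI).
  { destruct (Rlt_or_le (A u w + A w z) PI) as [h|h]; auto.
    pose proof (sin_le_0 _ h ltac:(lra)). lra. }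
  unfold A at 3. rewrite <- C. symmetry. apply acos_cos. lra.
Qed.

Definition opp (u : pt) : pt := (- fst u, - snd u).

Lemma A_supp u w : A u w + A w (opp u) = PI.
Proof.
  unfold A.
  replace (dot w (opp u) / (vnorm w * vnorm (opp u))) with (- (dot u w / (vnorm u * vnorm w))).
  - rewrite acos_opp. lra.
  - unfold vnorm, opp, dot; destruct u, w; simpl.
    replace (- r * - r + - r0 * - r0) with (r * r + r0 * r0) by ring.
    unfold Rdiv. rewrite (Rmult_comm (sqrt (r1*r1+r2*r2))). ring.
Qed.

Lemma A_sym u w : A u w = A w u.
Proof. unfold A, dot. rewrite (Rmult_comm (vnorm u)). f_equal. f_equal. ring. Qed.

Lemma A_opp u w : A (opp u) (opp w) = A u w.
Proof.
  unfold A, vnorm, opp, dot; destruct u, w; simpl. f_equal. f_equal; [ring|].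
  f_equal; f_equal; ring.
Qed.

Lemma angle_A a b c : angle a b c = A (vsub a b) (vsub c b).
Proof. reflexivity. Qed.

Lemma angle_sym a b c : angle a b c = angle c b a.
Proof. rewrite !angle_A. apply A_sym. Qed.

Lemma tri_sum a b c : 0 < cross (vsub b a) (vsub c a) ->
  angle b a c + angle a b c + angle a c b = PI.
Proof.
  intros H. rewrite !angle_A.
  set (u := vsub b a); set (w := vsub c a); set (z := vsub c b).
  assert (E1 : vsub a b = opp u) by (unfold u, opp, vsub; simpl; f_equal; ring).
  assert (E2 : vsub a c = opp w) by (unfold w, opp, vsub; simpl; f_equal; ring).
  assert (E3 : vsub b c = opp z) by (unfold z, opp, vsub; simpl; f_equal; ring).
  rewrite E1, E2, E3, A_opp.
  assert (K1 : cross w z = cross u w) by (unfold u, w, z, cross, vsub; simpl; ring).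
  assert (K2 : cross u z = cross u w) by (unfold u, w, z, cross, vsub; simpl; ring).
  rewrite (A_sym (opp u) z).
  assert (P1 : 0 < cross w z) by (rewrite K1; exact H). assert (P2 : 0 < cross u z) by (rewrite K2; exact H).
  pose proof (A_add u w z H P1 P2).
  pose proof (A_supp u z). lra.
Qed.

Fixpoint Ssum (f : nat -> R) (n : nat) : R :=
  match n with O => 0 | S n' => Ssum f n' + f n' end.

Definition CCW (q : nat -> pt) (m : nat) : Prop :=
  forall a b c, (a < b)%nat -> (b < c)%nat -> (c <= m)%nat ->
    0 < cross (vsub (q b) (q a)) (vsub (q c) (q a)).

Lemma rot1 a b c : cross (vsub b a) (vsub c a) = cross (vsub c b) (vsub a b).
Proof. unfold cross, vsub; simpl; ring. Qed.
Lemma rot2 a b c : cross (vsub b a) (vsub c a) = cross (vsub a c) (vsub b c).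
Proof. unfold cross, vsub; simpl; ring. Qed.

Lemma poly_sum (q : nat -> pt) (m : nat) : (2 <= m)%nat -> CCW q m ->
  angle (q m) (q 0%nat) (q 1%nat)
  + Ssum (fun t => angle (q t) (q (t+1)%nat) (q (t+2)%nat)) (m-1)
  + angle (q (m-1)%nat) (q m) (q 0%nat) = INR (m-1) * PI.
Proof.
  induction m as [|p IH]; intros Hm Hc; [lia|].
  destruct (Nat.eq_dec p 1) as [->|Hp].
  - simpl. pose proof (tri_sum (q 0%nat) (q 1%nat) (q 2%nat) (Hc 0%nat 1%nat 2%nat ltac:(lia) ltac:(lia) ltac:(lia))).
    rewrite (angle_sym (q 2%nat)), (angle_sym (q 1%nat) (q 2%nat)). lra.
  - assert (Hc' : CCW q p) by (intros a b c ? ? ?; apply Hc; lia).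
    specialize (IH ltac:(lia) Hc').
    replace (S p - 1)%nat with (S (p - 1)) by lia. simpl Ssum.
    replace (p - 1 + 1)%nat with p by lia. replace (p - 1 + 2)%nat with (S p) by lia.
    replace (S (p-1)) with p by lia.
    set (m := S p) in *.
    pose proof (A_add (vsub (q 1%nat) (q 0%nat)) (vsub (q p) (q 0%nat)) (vsub (q m) (q 0%nat))
       (Hc 0%nat 1%nat p ltac:(lia) ltac:(lia) ltac:(lia))
       (Hc 0%nat p m ltac:(lia) ltac:(lia) ltac:(lia))
       (Hc 0%nat 1%nat m ltac:(lia) ltac:(lia) ltac:(lia))) as Ad1.
    pose proof (Hc 0%nat p m ltac:(lia) ltac:(lia) ltac:(lia)) as X1. rewrite rot1 in X1.
    pose proof (Hc 0%nat (p-1)%nat p ltac:(lia) ltac:(lia) ltac:(lia)) as X2. rewrite rot2 in X2.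
    pose proof (Hc (p-1)%nat p m ltac:(lia) ltac:(lia) ltac:(lia)) as X3. rewrite rot1 in X3.
    pose proof (A_add _ _ _ X1 X2 X3) as Ad2.
    pose proof (tri_sum (q 0%nat) (q p) (q m) (Hc 0%nat p m ltac:(lia) ltac:(lia) ltac:(lia))) as Tr.
    rewrite <- !angle_A in Ad1, Ad2.
    replace (m - 1)%nat with p by (unfold m; lia).
    assert (INR p = INR (p-1) + 1) by (rewrite <- S_INR; f_equal; lia).
    rewrite (angle_sym (q m) (q 0%nat) (q 1%nat)), (angle_sym (q p) (q 0%nat) (q 1%nat)) in *.
    rewrite (angle_sym (q (p-1)%nat) (q p) (q 0%nat)) in *.
    rewrite (angle_sym (q (p-1)%nat) (q p) (q m)) in *.
    rewrite (angle_sym (q p) (q m) (q 0%nat)) in *.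
    rewrite (angle_sym (q 0%nat) (q p) (q m)) in *.
    nra.
Qed.

Lemma mod_neq n i b : (0 < b < n)%nat -> ((i + b) mod n <> i mod n)%nat.
Proof.
  intros Hb. rewrite <- Nat.add_mod_idemp_l by lia.
  pose proof (Nat.mod_upper_bound i n ltac:(lia)).
  set (r := i mod n) in *.
  destruct (Nat.lt_ge_cases (r + b) n).
  - rewrite Nat.mod_small by lia. lia.
  - replace (r + b)%nat with ((r + b - n) + 1 * n)%nat by lia.
    rewrite Nat.Div0.mod_add, Nat.mod_small by lia. lia.
Qed.

Lemma vert_add_n n v x : (0 < n)%nat -> vert n v (x + n) = vert n v x.
Proof.
  intros H. unfold vert. f_equal. replace (x + n)%nat with (x + 1 * n)%nat by lia.
  apply Nat.Div0.mod_add.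
Qed.

Lemma edge n v s t : convex_ccw_polygon n v ->
  (s mod n <> t mod n)%nat -> (s mod n <> (t + 1) mod n)%nat ->
  0 < cross (vsub (vert n v (t + 1)) (vert n v t)) (vsub (vert n v s) (vert n v t)).
Proof.
  intros [Hn Hc] H1 H2.
  assert (E : ((t mod n + 1) mod n = (t + 1) mod n)%nat) by (apply Nat.add_mod_idemp_l; lia).
  pose proof (Hc (t mod n) (s mod n) ltac:(apply Nat.mod_upper_bound; lia)
                 ltac:(apply Nat.mod_upper_bound; lia) H1 ltac:(rewrite E; exact H2)) as K.
  unfold vert in *. rewrite E, !Nat.mod_mod in K by lia. exact K.
Qed.

Lemma cross_trans e x y z : 0 <= cross e x -> 0 < cross e y -> 0 < cross e z ->
  0 < cross x y -> 0 < cross y z -> 0 < cross x z.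
Proof.
  intros. assert (I : cross x z * cross e y = cross x y * cross e z + cross y z * cross e x)
    by (destruct e, x, y, z; unfold cross; simpl; ring).
  nra.
Qed.

Lemma triple n v i b c : convex_ccw_polygon n v -> (0 < b)%nat -> (b < c)%nat -> (c < n)%nat ->
  0 < cross (vsub (vert n v (i + b)) (vert n v i)) (vsub (vert n v (i + c)) (vert n v i)).
Proof.
  intros Hcv Hb Hbc Hcn.
  assert (Hn : (3 <= n)%nat) by (destruct Hcv; auto).
  set (w := fun j => vsub (vert n v (i + j)) (vert n v i)).
  assert (F1 : forall j, (1 <= j)%nat -> (j + 1 < n)%nat -> 0 < cross (w j) (w (j+1)%nat)).
  { intros j H1 H2. unfold w.
    pose proof (edge n v i (i + j) Hcv) as K.
    replace (i + (j + 1))%nat with (i + j + 1)%nat by lia.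
    rewrite <- rot2. apply K.
    - intro E. apply (mod_neq n i j); [lia|]. lia.
    - intro E. apply (mod_neq n i (j+1)); [lia|]. rewrite Nat.add_assoc. lia. }
  assert (F2 : forall j, (2 <= j)%nat -> (j < n)%nat -> 0 < cross (w 1%nat) (w j)).
  { intros j H1 H2. unfold w.
    apply (edge n v (i + j) i Hcv).
    - apply mod_neq; lia.
    - replace (i + j)%nat with ((i + 1) + (j - 1))%nat by lia. apply mod_neq; lia. }
  assert (G : forall d, (b + 1 + d < n)%nat -> 0 < cross (w b) (w (b + 1 + d)%nat)).
  { induction d as [|d IH]; intros Hd.
    - replace (b + 1 + 0)%nat with (b+1)%nat by lia. apply F1; lia.
    - apply (cross_trans (w 1%nat) (w b) (w (b + 1 + d)%nat)).
      + destruct (Nat.eq_dec b 1) as [->|]. * unfold cross; lra. * apply Rlt_le, F2; lia.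
      + apply F2; lia.
      + apply F2; lia.
      + apply IH; lia.
      + replace (b + 1 + S d)%nat with (b + 1 + d + 1)%nat by lia. apply F1; lia. }
  replace c with (b + 1 + (c - b - 1))%nat by lia. apply (G (c - b - 1)%nat). lia.
Qed.

Lemma Ssum_ext f g n : (forall t, (t < n)%nat -> f t = g t) -> Ssum f n = Ssum g n.
Proof. induction n; intros H; simpl; auto. rewrite IHn, H; auto; intros; apply H; lia. Qed.

Lemma Ssum_plus f g n : Ssum (fun t => f t + g t) n = Ssum f n + Ssum g n.
Proof. induction n; simpl; [lra|]. rewrite IHn; lra. Qed.

Lemma Ssum_const c n : Ssum (fun _ => c) n = INR n * c.
Proof. induction n; simpl Ssum; [simpl; lra|]. rewrite IHn, S_INR; lra. Qed.

Lemma Ssum_shift f n : Ssum f (S n) = f 0%nat + Ssum (fun t => f (t + 1)%nat) n.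
Proof.
  induction n; simpl Ssum; [simpl; lra|]. simpl Ssum in IHn. rewrite IHn.
  replace (n + 1)%nat with (S n) by lia. lra.
Qed.

Lemma Ssum_swap (h : nat -> nat -> R) a b :
  Ssum (fun i => Ssum (fun t => h i t) b) a = Ssum (fun t => Ssum (fun i => h i t) a) b.
Proof.
  induction a; simpl.
  - rewrite Ssum_const. simpl; lra.
  - rewrite IHa, <- Ssum_plus. reflexivity.
Qed.

Lemma Ssum_periodic f n s : (forall t, f (t + n)%nat = f t) ->
  Ssum (fun i => f (i + s)%nat) n = Ssum f n.
Proof.
  intros Hp. induction s.
  - apply Ssum_ext; intros; f_equal; lia.
  - rewrite <- IHs.
    pose proof (Ssum_shift (fun i => f (i + s)%nat) n) as K. simpl Ssum in K.
    replace (Ssum (fun i => f (i + S s)%nat) n) with (Ssum (fun t => f (t + 1 + s)%nat) n)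
      by (apply Ssum_ext; intros; f_equal; lia).
    replace (f (n + s)%nat) with (f (0 + s)%nat) in K
      by (replace (n + s)%nat with (s + n)%nat by lia; rewrite Hp; f_equal).
    lra.
Qed.

Theorem mainTheorem8 :
  forall (n k : nat) (v : nat -> pt) (alpha : R),
    (2 <= k)%nat -> (2 * k <= n)%nat ->
    convex_ccw_polygon n v ->
    gutkin_contact n k v alpha ->
    alpha = PI * INR (k - 1) / INR n.
Proof.
  intros n k v alpha Hk Hkn Hcv Hg.
  set (P := vert n v).
  set (th := fun t => angle (P (t + (n - 1))%nat) (P t) (P (t + 1)%nat)).
  assert (Hper : forall t, th (t + n)%nat = th t).
  { intro t. unfold th, P.
    replace (t + n + (n - 1))%nat with (t + (n - 1) + n)%nat by lia.
    replace (t + n + 1)%nat with (t + 1 + n)%nat by lia.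
    rewrite !vert_add_n by lia. reflexivity. }
  assert (Full : Ssum th n = INR (n - 2) * PI).
  { pose proof (poly_sum P (n - 1) ltac:(lia)) as K.
    assert (C : CCW P (n - 1)).
    { intros a b c ? ? ?. unfold P.
      pose proof (triple n v a (b - a) (c - a) Hcv ltac:(lia) ltac:(lia) ltac:(lia)) as T.
      replace (a + (b - a))%nat with b in T by lia.
      replace (a + (c - a))%nat with c in T by lia. exact T. }
    specialize (K C). replace (n - 1 - 1)%nat with (n - 2)%nat in K by lia.
    replace n with (S (S (n - 2))) at 1 by lia.
    rewrite Ssum_shift. change (Ssum ?f (S ?m)) with (Ssum f m + f m).
    assert (E1 : th 0%nat = angle (P (n - 1)%nat) (P 0%nat) (P 1%nat)) by reflexivity.
    assert (E2 : th (n - 2 + 1)%nat = angle (P (n - 2)%nat) (P (n - 1)%nat) (P 0%nat)).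
    { unfold th. replace (n - 2 + 1 + (n - 1))%nat with ((n - 2) + n)%nat by lia.
      replace (n - 2 + 1 + 1)%nat with (0 + n)%nat by lia.
      replace (n - 2 + 1)%nat with (n - 1)%nat by lia. unfold P. rewrite !vert_add_n by lia. reflexivity. }
    assert (E3 : Ssum (fun t => th (t + 1)%nat) (n - 2) =
                 Ssum (fun t => angle (P t) (P (t + 1)%nat) (P (t + 2)%nat)) (n - 2)).
    { apply Ssum_ext. intros t Ht. unfold th.
      replace (t + 1 + (n - 1))%nat with (t + n)%nat by lia.
      replace (t + 1 + 1)%nat with (t + 2)%nat by lia.
      unfold P. rewrite vert_add_n by lia. reflexivity. }
    rewrite E1, E2, E3. replace (n - 1 - 1)%nat with (n - 2)%nat in K by lia. lra. }
  assert (Sub : forall i, 2 * alpha + Ssum (fun t => th (i + t + 1)%nat) (k - 1) = INR (k - 1) * PI).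
  { intro i. pose proof (poly_sum (fun j => P (i + j)%nat) k Hk) as K.
    assert (C : CCW (fun j => P (i + j)%nat) k).
    { intros a b c ? ? ?. unfold P.
      pose proof (triple n v (i + a) (b - a) (c - a) Hcv ltac:(lia) ltac:(lia) ltac:(lia)) as T.
      replace (i + a + (b - a))%nat with (i + b)%nat in T by lia.
      replace (i + a + (c - a))%nat with (i + c)%nat in T by lia. exact T. }
    specialize (K C). simpl in K.
    destruct (Hg i) as [G1 G2]. fold P in G1, G2.
    rewrite Nat.add_0_r in K.
    replace (i + k - 1)%nat with (i + (k - 1))%nat in G2 by lia.
    rewrite angle_sym in G1.
    assert (E : Ssum (fun t => th (i + t + 1)%nat) (k - 1) =
                Ssum (fun t => angle (P (i + t)%nat) (P (i + (t + 1))%nat) (P (i + (t + 2))%nat)) (k - 1)).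
    { apply Ssum_ext. intros t Ht. unfold th.
      replace (i + t + 1 + (n - 1))%nat with (i + t + n)%nat by lia.
      replace (i + t + 1 + 1)%nat with (i + (t + 2))%nat by lia.
      replace (i + t + 1)%nat with (i + (t + 1))%nat by lia.
      unfold P. rewrite vert_add_n by lia. reflexivity. }
    rewrite E. lra. }
  assert (Tot : Ssum (fun i => 2 * alpha + Ssum (fun t => th (i + t + 1)%nat) (k - 1)) n
                = INR n * (INR (k - 1) * PI)).
  { rewrite <- Ssum_const. apply Ssum_ext; intros; apply Sub. }
  rewrite Ssum_plus, Ssum_const, Ssum_swap in Tot.
  rewrite (Ssum_ext _ (fun t => Ssum th n)) in Tot.
  2:{ intros t Ht. rewrite <- (Ssum_periodic th n (t + 1) Hper).
      apply Ssum_ext; intros; f_equal; lia. }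
  rewrite Ssum_const, Full in Tot.
  rewrite !minus_INR in Tot by lia.
  assert (0 < INR n) by (apply lt_0_INR; lia).
  simpl (INR 1) in Tot. simpl (INR 2) in Tot.
  rewrite minus_INR by lia. simpl (INR 1).
  apply Rmult_eq_reg_l with (2 * INR n); [|lra].
  field_simplify; [|lra]. nra.
Qed.
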